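(* Let $k\geq 3$ be an integer, let $j$ be an integer with $2\leq j\leq k$, and let $0\leq a<b\leq 1$. If $(a,b)\subseteq\left[0,\frac{k-j}{k}\right)$ or $(a,b)\subseteq\left[\frac{j}{k},1\right)$, then $$d_k(a,b)\geq \frac{\log j}{\log k}.$$
   Context: $T_k:[0,1)\to[0,1)$ is the map $T_k(x)=kx \bmod 1$. For $0\leq a<b\leq 1$, $\mathcal{W}_k(a,b)=\{x\in[0,1)\ :\ T_k^n(x)\notin(a,b)\text{ for all } n\geq 0\}$, and $d_k(a,b)$ denotes the Hausdorff dimension of $\mathcal{W}_k(a,b)$. *)

(* Defs.v *)
From HB Require Import structures.
From mathcomp Require Import all_boot all_order all_algebra.
From mathcomp Require Import all_classical all_reals all_analysis.
Set Implicit Arguments. Unset Strict Implicit. Unset Printing Implicit Defensive.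
Import Order.TTheory GRing.Theory Num.Theory.
Import numFieldNormedType.Exports.
Local Open Scope classical_set_scope.
Local Open Scope ring_scope.

Section Defs.
Variable R : realType.

(* diameter of a subset of R (as an extended real; -oo for the empty set) *)
Definition diam (U : set R) : \bar R :=
  ereal_sup [set (`|x - y|)%:E | x in U & y in U].

Definition diam_pow (s : R) (U : set R) : R :=
  if U == set0 then 0 else powR (fine (diam U)) s.

Definition delta_cover (delta : R) (E : set R) (U : nat -> set R) : Prop :=
  E `<=` \bigcup_n U n /\ (forall n, (diam (U n) <= delta%:E)%E).

Definition hausdorff_content (s delta : R) (E : set R) : \bar R :=
  ereal_inf [set (\sum_(0 <= n <oo) (diam_pow s (U n))%:E)%E
            | U in delta_cover delta E].

(* s-dimensional Hausdorff (outer) measure: lim_{delta -> 0+} H^s_delta,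
   which equals the supremum over delta > 0 since H^s_delta is nonincreasing *)
Definition hausdorff_measure (s : R) (E : set R) : \bar R :=
  ereal_sup [set hausdorff_content s delta E | delta in [set d : R | 0 < d]].

Definition hausdorff_dim (E : set R) : \bar R :=
  ereal_inf [set s%:E | s in [set s : R | 0 <= s /\ hausdorff_measure s E = 0%E]].

Definition Tk (k : nat) (x : R) : R := k%:R * x - (Num.floor (k%:R * x))%:~R.

Definition Wk (k : nat) (a b : R) : set R :=
  [set x | 0 <= x < 1 /\ forall n : nat, ~ (a < iter n (Tk k) x < b)].

Definition dk (k : nat) (a b : R) : \bar R := hausdorff_dim (Wk k a b).

End Defs.

(* Main.v *)
Require Import Defs.
From HB Require Import structures.
From mathcomp Require Import all_boot all_order all_algebra.
From mathcomp Require Import all_classical all_reals all_analysis.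
From mathcomp Require Import ring lra zify.
From Stdlib Require Import Lia.
Import Order.TTheory GRing.Theory Num.Theory.
Import numFieldNormedType.Exports.
Local Open Scope classical_set_scope.
Local Open Scope ring_scope.


Lemma cover_len (R : realType) (V : nat -> set R) (r : nat -> R) :
  (forall n, 0 <= r n) ->
  (forall n x y, V n x -> V n y -> `|x - y| <= r n) ->
  [set x : R | 0 <= x < 1] `<=` \bigcup_n V n ->
  (1 <= \sum_(0 <= n <oo) ((2 * r n)%:E))%E.
Proof.
move=> r0 hV hcov.
have hI : forall n, exists I : interval R,
    V n `<=` [set` I] /\ (lebesgue_measure [set` I] <= (2 * r n)%:E)%E.
  move=> n; have [[v hv]|hne] := pselect (exists v, V n v).
    exists `[v - r n, v + r n]; split.
      move=> x hx; rewrite /= in_itv /=; have := hV n x v hx hv.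
      rewrite ler_norml => /andP[h1 h2]; apply/andP; split; lra.
    rewrite lebesgue_measure_itv /= lte_fin.
    case: ifPn => _; last by rewrite lee_fin mulr_ge0.
    by rewrite -EFinD lee_fin; lra.
  exists `]0, 0[; split.
    by move=> x hx; exfalso; apply: hne; exists x.
  by rewrite lebesgue_measure_itv /= lte_fin ltxx lee_fin mulr_ge0.
have [I hI'] := choice hI.
have h01 : [set x : R | 0 <= x < 1] = [set` `[0, 1[].
  by apply/seteqP; split => x /=; rewrite in_itv.
have m01 : lebesgue_measure [set` `[(0:R), 1[] = 1%E.
  by rewrite lebesgue_measure_itv /= lte_fin ltr01 oppr0 adde0.
rewrite -m01.
apply: le_trans (_ : (\sum_(0 <= n <oo) lebesgue_measure [set` I n] <= _)%E).
  apply: measure_sigma_subadditive.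
  - by move=> n; exact: measurable_itv.
  - exact: measurable_itv.
  - rewrite -h01 => x /hcov [n _ hx]; exists n => //; exact: (hI' n).1.
apply: lee_nneseries => n; first by move=> *; exact: measure_ge0. move=> _.
exact: (hI' n).2.
Qed.


Lemma diam_fin (R : realType) (U : set R) (u : R) (dl : R) :
  U u -> (diam U <= dl%:E)%E ->
  diam U = (fine (diam U))%:E /\ 0 <= fine (diam U) <= dl /\
  (forall x y, U x -> U y -> `|x - y| <= fine (diam U)).
Proof.
move=> hu hd.
have hub : forall x y, U x -> U y -> ((`|x - y|)%:E <= diam U)%E.
  move=> x y hx hy; apply: ereal_sup_ubound; by exists x => //; exists y.
have h0 : (0 <= diam U)%E by have := hub u u hu hu; rewrite subrr normr0.
have hf : diam U \is a fin_num.
  by rewrite ge0_fin_numE // (le_lt_trans hd) // ltey.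
have hK := fineK hf.
split; first by rewrite hK.
split.
  by rewrite -lee_fin -lee_fin hK h0 hd.
by move=> x y hx hy; rewrite -lee_fin hK; exact: hub.
Qed.

Lemma diam0 (R : realType) : fine (diam (@set0 R)) = 0.
Proof.
rewrite /diam (_ : [set _ | x in set0 & y in set0] = set0) ?ereal_sup0 //.
by apply/seteqP; split => z // [x []].
Qed.

Section Phi.
Variables (R : realType) (j k e : nat).
Hypothesis hj : (2 <= j)%N.
Hypothesis hjk : (j < k)%N.
Hypothesis hejk : (e + j <= k)%N.

Let kr : R := k%:R.
Let jr : R := j%:R.
Let er : R := e%:R.

Lemma kr_gt1 : 1 < kr.
Proof. rewrite /kr (_ : 1 = 1%:R) // ltr_nat; lia. Qed.
Lemma jr_ge2 : 2 <= jr.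
Proof. by rewrite /jr ler_nat. Qed.
Lemma jr_lt_kr : jr + 1 <= kr.
Proof. by rewrite /jr /kr -(natrD _ j 1) ler_nat addn1. Qed.
Lemma ejk : er + jr <= kr.
Proof. by rewrite /jr /kr /er -natrD ler_nat. Qed.
Lemma er_ge0 : 0 <= er.
Proof. by rewrite /er. Qed.

Definition dg (x : R) : R := (Num.floor (jr * x))%:~R.

Lemma Tk_dg x : Tk j x = jr * x - dg x.
Proof. by []. Qed.

Lemma Tk_01 (n : nat) (x : R) : 0 <= Tk n x < 1.
Proof.
rewrite /Tk; have /andP[h1 h2] := floor_itv (n%:R * x).
rewrite intrD in h2; apply/andP; split; lra.
Qed.

Lemma dg_bounds x : 0 <= x < 1 -> 0 <= dg x /\ dg x <= jr - 1.
Proof.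
move=> /andP[x0 x1]; rewrite /dg; split.
  by rewrite ler0z floor_ge0 mulr_ge0.
have : Num.floor (jr * x) < j%:Z.
  rewrite floor_lt_int /jr. 
  have hj0 : 0 < (j%:R : R) by rewrite ltr0n; lia.
  have -> : ((j%:Z)%:~R : R) = j%:R by [].
  by rewrite -[X in _ < X]mulr1 ltr_pM2l.
move=> h.
have : Num.floor (jr * x) <= j%:Z - 1 by rewrite -ltzD1 subrK.
rewrite -(ler_int R) intrB /jr => h'. exact: h'.
Qed.


Definition mm : R := er / (kr - 1).
Definition MM : R := (er + jr - 1) / (kr - 1).

Lemma kr1_gt0 : 0 < kr - 1.
Proof. have := kr_gt1; lra. Qed.

Lemma hm : mm * kr = er + mm.
Proof.
have h := kr1_gt0; rewrite /mm.
by field; rewrite lt0r_neq0.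
Qed.

Lemma hM : MM * kr = er + jr - 1 + MM.
Proof.
have h := kr1_gt0; rewrite /MM.
by field; rewrite lt0r_neq0.
Qed.

Lemma mm_ge0 : 0 <= mm.
Proof. by rewrite /mm divr_ge0 // ?er_ge0 // ltW // kr1_gt0. Qed.

Lemma MM_le1 : MM <= 1.
Proof.
rewrite /MM ler_pdivrMr ?kr1_gt0 // mul1r; have := ejk; lra.
Qed.

Lemma MMmm : MM - mm = (jr - 1) / (kr - 1).
Proof. rewrite /MM /mm -mulrBl; congr (_ / _); lra. Qed.

Definition gap : R := (1 - (MM - mm)) / kr.

Lemma gap_gt0 : 0 < gap.
Proof.
rewrite /gap divr_gt0 //; last by have := kr_gt1; lra.
rewrite MMmm subr_gt0 ltr_pdivrMr ?kr1_gt0 // mul1r; have := jr_lt_kr; lra.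
Qed.


Fixpoint S (n : nat) (x : R) : R :=
  if n is n'.+1 then (er + dg x + S n' (Tk j x)) / kr else mm.

Let kr_gt0 : 0 < kr.
Proof. have := kr_gt1; lra. Qed.

Lemma S_bounds n x : 0 <= x < 1 -> mm <= S n x <= MM.
Proof.
elim: n x => [|n IH] x hx /=.
  rewrite lexx /= -subr_ge0 MMmm divr_ge0 //; last exact: ltW kr1_gt0.
  have := jr_ge2; lra.
have /andP[h1 h2] := IH _ (Tk_01 j x).
have [d0 d1] := dg_bounds x hx.
rewrite ler_pdivlMr // ler_pdivrMr // hm hM; apply/andP; split; lra.
Qed.

Lemma S_mono n x : 0 <= x < 1 -> S n x <= S n.+1 x.
Proof.
elim: n x => [|n IH] x hx.
  rewrite /= ler_pdivlMr // hm.
  have [d0 d1] := dg_bounds x hx; lra.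
rewrite [S n.+1 x]/= [S n.+2 x]/=.
rewrite ler_pM2r ?invr_gt0 // lerD2l.
exact: IH _ (Tk_01 j x).
Qed.

Definition phi (x : R) : R := sup (range (fun n => S n x)).

Lemma phi_has_sup x : 0 <= x < 1 -> has_sup (range (fun n => S n x)).
Proof.
move=> hx; split; first by exists (S 0 x), 0%N.
exists MM => _ [n _ <-]; have /andP[] := S_bounds n x hx; done.
Qed.

Lemma S_le_phi n x : 0 <= x < 1 -> S n x <= phi x.
Proof.
move=> hx; apply: (sup_upper_bound (phi_has_sup x hx)); by exists n.
Qed.

Lemma phi_le_ub x b : 0 <= x < 1 -> (forall n, S n x <= b) -> phi x <= b.
Proof.
move=> hx hb; apply: ge_sup; first by exists (S 0 x), 0%N.
by move=> _ [n _ <-].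
Qed.

Lemma phi_bounds x : 0 <= x < 1 -> mm <= phi x <= MM.
Proof.
move=> hx; apply/andP; split.
  apply: le_trans (S_le_phi 0 x hx); exact: lexx.
apply: phi_le_ub => // n; by have /andP[] := S_bounds n x hx.
Qed.

Lemma phi_eq x : 0 <= x < 1 -> phi x = (er + dg x + phi (Tk j x)) / kr.
Proof.
move=> hx; have hT := Tk_01 j x.
apply/eqP; rewrite eq_le; apply/andP; split.
  apply: phi_le_ub => // -[|n].
    apply: le_trans (S_mono 0 x hx) _.
    rewrite /= ler_pM2r ?invr_gt0 // lerD2l.
    by have /andP[] := phi_bounds (Tk j x) hT.
  rewrite /= ler_pM2r ?invr_gt0 // lerD2l; exact: S_le_phi _ _ hT.
rewrite ler_pdivrMr //.
have : phi (Tk j x) <= phi x * kr - (er + dg x).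
  apply: phi_le_ub => // n.
  have h := S_le_phi n.+1 x hx; move: h; rewrite /= ler_pdivrMr //; lra.
lra.
Qed.


Lemma jr_gt0 : 0 < jr.
Proof. have := jr_ge2; lra. Qed.

Lemma arch eps : 0 < eps -> exists n, (jr ^+ n)^-1 < eps.
Proof.
move=> he; exists (Num.truncn eps^-1).+1.
have h1 := truncnS_gt eps^-1.
have h2 : ((Num.truncn eps^-1).+1%:R : R) < jr ^+ (Num.truncn eps^-1).+1.
  by rewrite /jr -natrX ltr_nat ltn_expl.
have h3 := lt_trans h1 h2.
move: h3; set N := (Num.truncn eps^-1).+1 => h3.
rewrite -[eps]invrK ltf_pV2 ?posrE ?invr_gt0 ?exprn_gt0 ?jr_gt0 //.
Qed.

Lemma phi_step z : 0 <= z < 1 -> phi z = 1 ->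
  phi (Tk j z) = 1 /\ 1 - Tk j z = jr * (1 - z).
Proof.
move=> hz h1; have hT := Tk_01 j z.
have := phi_eq z hz; rewrite h1 => /(congr1 (fun t => t * kr)).
rewrite divfK ?lt0r_neq0 // mul1r => h.
have /andP[p1 p2] := phi_bounds _ hT.
have := MM_le1; have := ejk; have [d0 d1] := dg_bounds z hz.
rewrite Tk_dg; split; lra.
Qed.

Lemma phi_lt1 x : 0 <= x < 1 -> phi x < 1.
Proof.
move=> hx; rewrite ltNge; apply/negP => hge.
have h1 : phi x = 1.
  by apply/eqP; rewrite eq_le hge andbT (le_trans _ MM_le1) //; case/andP: (phi_bounds x hx).
have hi : forall n, 0 <= iter n (Tk j) x < 1.
  by case=> [|n] //=; exact: Tk_01.
have key : forall n, phi (iter n (Tk j) x) = 1 /\ 1 - iter n (Tk j) x = jr ^+ n * (1 - x).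
  elim=> [|n [IH1 IH2]]; first by rewrite /= expr0 mul1r.
  have [s1 s2] := phi_step _ (hi n) IH1.
  by rewrite iterS s1 s2 IH2 exprS mulrA; split.
have hx1 : 0 < 1 - x by case/andP: hx => _; rewrite subr_gt0.
have [n hn] := arch (1 - x) hx1.
have [_ h2] := key n; have /andP[h3 _] := hi n.
have : jr ^+ n * (1 - x) <= 1 by lra.
rewrite -ler_pdivlMl ?exprn_gt0 ?jr_gt0 // mulr1; lra.
Qed.

Lemma phi_ge0 x : 0 <= x < 1 -> 0 <= phi x.
Proof. by move=> hx; case/andP: (phi_bounds x hx) => h _; apply: le_trans mm_ge0 h. Qed.

Lemma Tk_phi x : 0 <= x < 1 -> Tk k (phi x) = phi (Tk j x).
Proof.
move=> hx; have hT := Tk_01 j x.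
have h : kr * phi x = er + dg x + phi (Tk j x).
  by rewrite (phi_eq x hx) mulrC divfK // lt0r_neq0.
have p0 := phi_ge0 _ hT; have p1 := phi_lt1 _ hT.
have hf : Num.floor (kr * phi x) = e%:Z + Num.floor (jr * x).
  apply: floor_def; rewrite h !intrD.
  have -> : ((e%:Z)%:~R : R) = er by [].
  rewrite -/(dg x); apply/andP; split; lra.
rewrite /Tk -/kr hf h intrD.
have -> : ((e%:Z)%:~R : R) = er by [].
rewrite -/(dg x); lra.
Qed.

Lemma iter_phi n x : 0 <= x < 1 -> iter n (Tk k) (phi x) = phi (iter n (Tk j) x).
Proof.
move=> hx; elim: n => [|n IH] //=.
rewrite IH Tk_phi //; case: n {IH} => [|n] //=; exact: Tk_01.
Qed.

Lemma phi_range x : 0 <= x < 1 -> er / kr <= phi x < (er + jr) / kr.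
Proof.
move=> hx; have hT := Tk_01 j x.
have p0 := phi_ge0 _ hT; have p1 := phi_lt1 _ hT.
have [d0 d1] := dg_bounds x hx.
rewrite (phi_eq x hx) ler_pM2r ?invr_gt0 // ltr_pM2r ?invr_gt0 //.
apply/andP; split; lra.
Qed.


Lemma hgap : gap * kr = 1 - (MM - mm).
Proof. by rewrite /gap divfK // lt0r_neq0. Qed.

Lemma dg_sep x y : 0 <= x < 1 -> 0 <= y < 1 -> dg x != dg y ->
  dg x + 1 <= dg y \/ dg y + 1 <= dg x.
Proof.
move=> _ _; rewrite /dg eqr_int => hne.
have : (Num.floor (jr * x) + 1 <= Num.floor (jr * y))%R \/
       (Num.floor (jr * y) + 1 <= Num.floor (jr * x))%R by lia.
by case=> h; [left|right]; rewrite -(ler_int R) intrD in h.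
Qed.

Lemma gapR n : forall x y, 0 <= x < 1 -> 0 <= y < 1 ->
  (jr ^+ n)^-1 <= `|x - y| -> gap / kr ^+ n <= `|phi x - phi y|.
Proof.
elim: n => [|n IH] x y hx hy.
  rewrite expr0 invr1 => h.
  have : `|x - y| < 1 by rewrite ltr_norml; case/andP: hx; case/andP: hy => *; apply/andP; split; lra.
  lra.
move=> hxy.
have hTx := Tk_01 j x; have hTy := Tk_01 j y.
have ex : phi x * kr = er + dg x + phi (Tk j x) by rewrite (phi_eq x hx) divfK // lt0r_neq0.
have ey : phi y * kr = er + dg y + phi (Tk j y) by rewrite (phi_eq y hy) divfK // lt0r_neq0.
have hkn : 0 < kr ^+ n.+1 by rewrite exprn_gt0.
have [hd|hd] := eqVneq (dg x) (dg y).
  have eT : Tk j x - Tk j y = jr * (x - y) by rewrite !Tk_dg hd; lra.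
  have h1 : (jr ^+ n)^-1 <= `|Tk j x - Tk j y|.
    rewrite eT normrM ger0_norm ?(ltW jr_gt0) //.
    by move: hxy; rewrite exprS invfM -ler_pdivlMl ?invr_gt0 ?jr_gt0 // invrK.
  have := IH _ _ hTx hTy h1.
  have eP : phi x - phi y = (phi (Tk j x) - phi (Tk j y)) / kr.
    rewrite (phi_eq x hx) (phi_eq y hy) hd -mulrBl; congr (_ / _); lra.
  have hki : 0 <= kr^-1 by rewrite invr_ge0 ltW.
  rewrite eP normrM (ger0_norm hki).
  move=> h; rewrite exprS invfM (mulrC kr^-1) mulrA.
  exact: ler_wpM2r.
have /andP[a1 a2] := phi_bounds _ hTx; have /andP[b1 b2] := phi_bounds _ hTy.
have hg : gap <= `|phi x - phi y|.
  rewrite -(ler_pM2r kr_gt0) hgap.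
  have [h|h] := dg_sep _ _ hx hy hd.
    apply: le_trans (_ : - (phi x - phi y) * kr <= _).
      rewrite mulNr mulrBl ex ey; lra.
    rewrite ler_pM2r // -normrN; exact: ler_norm.
  apply: le_trans (_ : (phi x - phi y) * kr <= _).
    rewrite mulrBl ex ey; lra.
  rewrite ler_pM2r //; exact: ler_norm.
apply: le_trans hg; rewrite ler_pdivrMr // ler_peMr ?(ltW gap_gt0) //.
apply: exprn_ege1; exact: ltW kr_gt1.
Qed.


Definition tt : R := ln jr / ln kr.

Lemma lnkr_gt0 : 0 < ln kr.
Proof. exact: ln_gt0 kr_gt1. Qed.

Lemma tt_gt0 : 0 < tt.
Proof. rewrite /tt divr_gt0 ?lnkr_gt0 //; apply: ln_gt0; have := jr_ge2; lra. Qed.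

Lemma powR_kj n : (kr ^+ n)^-1 `^ tt = (jr ^+ n)^-1.
Proof.
have hk : 0 < (kr ^+ n)^-1 by rewrite invr_gt0 exprn_gt0.
have hj' : 0 < (jr ^+ n)^-1 by rewrite invr_gt0 exprn_gt0 ?jr_gt0.
apply: ln_inj; rewrite ?posrE ?powR_gt0 //.
rewrite ln_powR !lnV ?posrE ?exprn_gt0 ?jr_gt0 // !lnXn ?jr_gt0 //.
rewrite mulrN mulrnAr /tt divfK //; exact: lt0r_neq0 lnkr_gt0.
Qed.

Lemma holder x y d : 0 <= x < 1 -> 0 <= y < 1 -> 0 <= d ->
  `|phi x - phi y| <= d -> `|x - y| <= jr * (d / gap) `^ tt.
Proof.
move=> hx hy hd hp.
have [->|hne] := eqVneq x y.
  by rewrite subrr normr0 mulr_ge0 ?powR_ge0 // ltW // jr_gt0.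
have he : 0 < `|x - y| by rewrite normr_gt0 subr_eq0.
have exP : exists n, (jr ^+ n)^-1 <= `|x - y|.
  by have [n hn] := arch _ he; exists n; exact: ltW.
have [n Pn minn] := ex_minnP exP.
case: n Pn minn => [|n] Pn minn.
  move: Pn; rewrite expr0 invr1 => h.
  have : `|x - y| < 1 by rewrite ltr_norml; case/andP: hx; case/andP: hy => *; apply/andP; split; lra.
  lra.
have hlt : `|x - y| < (jr ^+ n)^-1.
  by rewrite ltNge; apply/negP => /minn; rewrite ltnn.
have hg := gapR n.+1 _ _ hx hy Pn.
have h1 : (kr ^+ n.+1)^-1 <= d / gap.
  rewrite ler_pdivlMr ?gap_gt0 // mulrC; exact: le_trans hg hp.
have h2 : (jr ^+ n.+1)^-1 <= (d / gap) `^ tt.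
  rewrite -powR_kj; apply: ge0_ler_powR => //; first exact: ltW tt_gt0.
    by rewrite nnegrE invr_ge0 exprn_ge0 // ltW.
  by rewrite nnegrE divr_ge0 // ltW // gap_gt0.
apply: (le_trans (ltW hlt)).
apply: le_trans (_ : jr * (jr ^+ n.+1)^-1 <= _); last first.
  by rewrite ler_pM2l ?jr_gt0.
rewrite exprS invfM mulrA mulfV ?mul1r //; exact: lt0r_neq0 jr_gt0.
Qed.


Definition KK : R := 2 * jr * (gap^-1) `^ tt.

Lemma KK_gt0 : 0 < KK.
Proof.
rewrite /KK !mulr_gt0 ?powR_gt0 ?invr_gt0 ?gap_gt0 ?jr_gt0 //.
Qed.

Lemma core (E : set R) (s : R) (U : nat -> set R) :
  (forall x, 0 <= x < 1 -> E (phi x)) -> 0 <= s -> s <= tt ->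
  delta_cover 1 E U ->
  ((KK^-1)%:E <= \sum_(0 <= n <oo) (diam_pow s (U n))%:E)%E.
Proof.
move=> hE s0 st [hcov hdiam].
pose V n := [set x : R | 0 <= x < 1 /\ U n (phi x)].
pose r n := jr * (fine (diam (U n)) / gap) `^ tt.
have r0 : forall n, 0 <= r n by move=> n; rewrite /r mulr_ge0 ?powR_ge0 // ltW // jr_gt0.
have hV : forall n x y, V n x -> V n y -> `|x - y| <= r n.
  move=> n x y [hx ux] [hy uy].
  have [_ [/andP[D0 _] hD]] := diam_fin _ _ _ _ ux (hdiam n).
  exact: holder _ _ _ hx hy D0 (hD _ _ ux uy).
have hc : [set x : R | 0 <= x < 1] `<=` \bigcup_n V n.
  move=> x hx; have [n _ hn] := hcov _ (hE x hx); by exists n.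
have h1 := cover_len _ _ _ r0 hV hc.
have hle : forall n, ((2 * r n)%:E <= KK%:E * (diam_pow s (U n))%:E)%E.
  move=> n; rewrite -EFinM lee_fin /diam_pow /r.
  case: ifPn => [/eqP ->|hne].
    rewrite diam0 mul0r powR0 ?mulr0 //; exact: lt0r_neq0 tt_gt0.
  have [u hu] := (set0P _).1 hne.
  have [_ [/andP[D0 D1] _]] := diam_fin _ _ _ _ hu (hdiam n).
  set D := fine (diam (U n)) in D0 D1 *.
  rewrite /KK -/D powRM ?invr_ge0 ?(ltW gap_gt0) //.
  rewrite [X in _ <= X]mulrC !mulrA ler_wpM2r ?powR_ge0 //.
  rewrite -[X in X <= _]mulrA [X in _ <= X]mulrC mulrA.
  suff hh : D `^ tt <= D `^ s.
    have := jr_gt0; have := powR_ge0 D tt; nra.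
  have [->|Dp] := eqVneq D 0.
    rewrite powR0 ?powR_ge0 //; exact: lt0r_neq0 tt_gt0.
  by apply: ger_powR => //; rewrite D1 andbT lt_neqAle D0 eq_sym Dp.
have h2 : (1 <= KK%:E * \sum_(0 <= n <oo) (diam_pow s (U n))%:E)%E.
  rewrite -nneseriesZl; last by move=> i _; rewrite lee_fin /diam_pow; case: ifP => // _; exact: powR_ge0.
  apply: le_trans h1 _; apply: lee_nneseries => n; last by move=> _; exact: hle.
  by move=> *; rewrite lee_fin mulr_ge0.
have hS : (0 <= \sum_(0 <= n <oo) (diam_pow s (U n))%:E)%E.
  apply: nneseries_ge0 => i _ _; rewrite lee_fin /diam_pow; case: ifP => // _; exact: powR_ge0.
move: h2 hS; case: (\sum_(0 <= n <oo) (diam_pow s (U n))%:E)%E => [x| |] //.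
  rewrite -EFinM !lee_fin => h2 _.
  by rewrite -(ler_pM2l KK_gt0) mulfV // lt0r_neq0 // KK_gt0.
by move=> _ _; exact: leey.
Qed.

Lemma hmeas_lb (E : set R) (s : R) :
  (forall x, 0 <= x < 1 -> E (phi x)) -> 0 <= s -> s <= tt ->
  ((KK^-1)%:E <= hausdorff_measure s E)%E.
Proof.
move=> hE s0 st.
apply: le_trans (_ : (hausdorff_content s 1 E <= _)%E); last first.
  apply: ereal_sup_ubound; exists 1; [by rewrite /= ltr01 | by []].
apply: le_ereal_inf_tmp => _ [U hU <-]; exact: (core E s U hE s0 st hU).
Qed.

End Phi.


Lemma main_e (R : realType) (j k e : nat) (a b : R) :
  (1 < j)%N -> (j < k)%N -> (e + j <= k)%N ->
  (forall z, 0 <= z < 1 -> ~ (a < phi R j k e z < b)) ->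
  ((tt R j k)%:E <= dk k a b)%E.
Proof.
move=> hj hjk hejk hz.
have hW : forall x, 0 <= x < 1 -> Wk k a b (phi R j k e x).
  move=> x hx; split.
    by rewrite phi_ge0 // phi_lt1.
  move=> n; rewrite iter_phi //; apply: hz.
  by case: n => [|n] //=; exact: Tk_01.
rewrite /dk /hausdorff_dim.
apply: le_ereal_inf_tmp => _ [s [s0 hs] <-].
rewrite lee_fin leNgt; apply/negP => st.
have := hmeas_lb _ _ _ _ hj hjk hejk _ _ hW s0 (ltW st).
rewrite hs lee_fin leNgt invr_gt0 KK_gt0 //.
Qed.

Theorem mainTheorem3 (R : realType) (k j : nat) (a b : R) :
  (3 <= k)%N -> (2 <= j <= k)%N ->
  0 <= a -> a < b -> b <= 1 ->
  ([set x : R | a < x < b] `<=` [set x : R | 0 <= x < (k - j)%:R / k%:R]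
   \/ [set x : R | a < x < b] `<=` [set x : R | j%:R / k%:R <= x < 1]) ->
  ((ln (j%:R : R) / ln (k%:R : R))%:E <= dk k a b)%E.
Proof.
move=> hk /andP[hj hjk'] a0 ab b1 H.
have hc : a < (a + b) / 2 < b by apply/andP; split; lra.
have kpos : (0 : R) < k%:R by rewrite ltr0n; lia.
case: H => [H1|H2].
  have /andP[c0 c1] := H1 _ hc.
  have hjk : (j < k)%N.
    case: (ltnP j k) => // hkj; exfalso.
    have e0 : (k - j)%N = 0%N by apply/eqP; rewrite subn_eq0.
    by move: c1; rewrite e0 mul0r; lra.
  apply: (main_e _ _ _ (k - j)%N) => //; first by rewrite subnK // ltnW.
  move=> z hz /H1 /andP[_ hlt].
  have hh : (k - j + j <= k)%N by rewrite subnK // ltnW.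
  have /andP[hge _] := phi_range _ _ _ _ hj hjk hh _ hz.
  lra.
have /andP[c0 c1] := H2 _ hc.
have hjk : (j < k)%N.
  case: (ltnP j k) => // hkj; exfalso.
  have : (1 : R) <= j%:R / k%:R by rewrite ler_pdivlMr // mul1r ler_nat.
  lra.
apply: (main_e _ _ _ 0%N) => //.
move=> z hz /H2 /andP[hge _].
have hh : (0 + j <= k)%N by rewrite add0n ltnW.
have /andP[_ hlt] := phi_range _ _ _ _ hj hjk hh _ hz.
move: hlt; rewrite add0r; lra.
Qed.
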